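(* For $\epsilon>0$ sufficiently small, the map $\{(\phi,\theta)\in S^2: y\neq 0\}\to S^2\times S^2\setminus\Delta$, $(\phi,\theta)\mapsto p_2(L_s(\phi,\theta))=(\hat a,-\hat b)$, is an immersion, where for $\theta\in(0,\pi)$ $$\hat a=(-\sin(\phi+\nu),-\cos(\phi+\nu),0),$$ $$\hat b=D^{-1}\Big(\cos^2\nu\cos^2\theta\sin(\phi+\nu)+\sin^2\theta\sin(\phi-\nu),\ \cos^2\nu\cos^2\theta\cos(\phi+\nu)+\sin^2\theta\cos(\phi-\nu),\ -\tfrac12\sin 2\nu\sin2\theta\Big),$$ and for $\theta\in(\pi,2\pi)$, $\hat a$ and the first two components of $\hat b$ are replaced by their negatives (the third component of $\hat b$ unchanged); here $\nu=\epsilon\sin\phi$ and $D=\cos^2\nu+\sin^2\nu\sin^2\theta$.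
   Context: $(\phi,\theta)$ are spherical-polar coordinates on $S^2$ with Cartesian coordinates $(x,y,z)=(\sin\phi\cos\theta,\sin\phi\sin\theta,\cos\phi)$, so $\{y\neq0\}=\{\phi\in(0,\pi),\theta\notin\{0,\pi\}\}$. $\Delta=\{(\hat r,\hat r)\}\subset S^2\times S^2$ is the diagonal. ($\hat a,\hat b$ are the unit vectors of the puncture holonomies $a=i\hat a\cdot\vec\sigma$, $b=i\hat b\cdot\vec\sigma$ of the normalized representative of the point $L_s(\phi,\theta)$ of the sphere Lagrangian in the traceless character variety of the twice-punctured torus, and $p_2$ is the homeomorphism $P_4\to S^2\times S^2\setminus\Delta$.) *)

(* Defs.v *)
From Stdlib Require Import Reals.
Open Scope R_scope.

Definition nu (eps phi : R) : R := eps * sin phi.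

Definition Dden (eps phi theta : R) : R :=
  (cos (nu eps phi))^2 + (sin (nu eps phi))^2 * (sin theta)^2.

Definition sgnth (theta : R) : R :=
  if Rlt_dec theta PI then 1 else -1.

(* the domain {y <> 0} in spherical coordinates *)
Definition dom (phi theta : R) : Prop :=
  0 < phi < PI /\ ((0 < theta < PI) \/ (PI < theta < 2 * PI)).

Definition a1 eps phi theta := sgnth theta * (- sin (phi + nu eps phi)).
Definition a2 eps phi theta := sgnth theta * (- cos (phi + nu eps phi)).
Definition a3 (eps phi theta : R) : R := 0.

Definition b1 eps phi theta :=
  sgnth theta *
  ((cos (nu eps phi))^2 * (cos theta)^2 * sin (phi + nu eps phi)
   + (sin theta)^2 * sin (phi - nu eps phi)) / Dden eps phi theta.
Definition b2 eps phi theta :=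
  sgnth theta *
  ((cos (nu eps phi))^2 * (cos theta)^2 * cos (phi + nu eps phi)
   + (sin theta)^2 * cos (phi - nu eps phi)) / Dden eps phi theta.
Definition b3 eps phi theta :=
  (- (1/2) * sin (2 * nu eps phi) * sin (2 * theta)) / Dden eps phi theta.

(* The map (phi,theta) |-> (a-hat, - b-hat) in R^3 x R^3 = R^6,
   indexed by components k = 0..5. *)
Definition Fmap (eps : R) (k : nat) (phi theta : R) : R :=
  match k with
  | 0%nat => a1 eps phi theta
  | 1%nat => a2 eps phi theta
  | 2%nat => a3 eps phi theta
  | 3%nat => - b1 eps phi theta
  | 4%nat => - b2 eps phi theta
  | _ => - b3 eps phi theta
  end.

Definition continuous2 (g : R -> R -> R) (p t : R) : Prop :=
  forall e, 0 < e -> exists d, 0 < d /\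
    forall p' t', Rabs (p' - p) < d -> Rabs (t' - t) < d ->
      Rabs (g p' t' - g p t) < e.

Definition C1_immersion_on (U : R -> R -> Prop) (n : nat)
    (f : nat -> R -> R -> R) : Prop :=
  exists d1 d2 : nat -> R -> R -> R,
    (forall k p t, (k < n)%nat -> U p t ->
       derivable_pt_lim (fun x => f k x t) p (d1 k p t) /\
       derivable_pt_lim (fun y => f k p y) t (d2 k p t)) /\
    (forall k p t, (k < n)%nat -> U p t ->
       continuous2 (d1 k) p t /\ continuous2 (d2 k) p t) /\
    (forall p t, U p t -> forall u v : R,
       (forall k, (k < n)%nat -> u * d1 k p t + v * d2 k p t = 0) ->
       u = 0 /\ v = 0).

(* Main.v *)
Require Import Defs.
From Stdlib Require Import Reals Lra Lia Psatz.
From Coquelicot Require Import Coquelicot.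
From Stdlib Require Import Reals Lra Psatz.
Open Scope R_scope.

Definition Fs (eps s : R) (k : nat) (phi theta : R) : R :=
  match k with
  | 0%nat => s * (- sin (phi + nu eps phi))
  | 1%nat => s * (- cos (phi + nu eps phi))
  | 2%nat => 0
  | 3%nat => - (s *
  ((cos (nu eps phi))^2 * (cos theta)^2 * sin (phi + nu eps phi)
   + (sin theta)^2 * sin (phi - nu eps phi)) / Dden eps phi theta)
  | 4%nat => - (s *
  ((cos (nu eps phi))^2 * (cos theta)^2 * cos (phi + nu eps phi)
   + (sin theta)^2 * cos (phi - nu eps phi)) / Dden eps phi theta)
  | _ => - ((- (1/2) * sin (2 * nu eps phi) * sin (2 * theta)) / Dden eps phi theta)
  end.

Lemma Fmap_Fs e k p t : Fmap e k p t = Fs e (sgnth t) k p t.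
Proof. destruct k as [|[|[|[|[|k]]]]]; reflexivity. Qed.

Definition DD e p t := cos (e * sin p) ^ 2 + sin (e * sin p) ^ 2 * sin t ^ 2.

Definition d1 (e : R) (k : nat) (p t : R) : R :=
  match k with
  | 0%nat => sgnth t * (- (cos (p + e * sin p) * (1 + e * cos p)))
  | 1%nat => sgnth t * (sin (p + e * sin p) * (1 + e * cos p))
  | 2%nat => 0
  | 3%nat => - (sgnth t *
      ((2*cos (e*sin p)*(-sin (e*sin p))*(e*cos p) * cos t^2 * sin(p+e*sin p)
        + cos (e*sin p)^2 * cos t^2 * cos(p+e*sin p)*(1+e*cos p)
        + sin t^2 * cos(p-e*sin p)*(1-e*cos p)) * DD e p t
       - (cos (e*sin p)^2 * cos t^2 * sin(p+e*sin p) + sin t^2 * sin(p-e*sin p))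
        * (2*cos (e*sin p)*(-sin (e*sin p))*(e*cos p)
           + 2*sin (e*sin p)*cos (e*sin p)*(e*cos p)*sin t^2)) / DD e p t ^ 2)
  | 4%nat => - (sgnth t *
      ((2*cos (e*sin p)*(-sin (e*sin p))*(e*cos p) * cos t^2 * cos(p+e*sin p)
        + cos (e*sin p)^2 * cos t^2 * (- sin(p+e*sin p))*(1+e*cos p)
        + sin t^2 * (- sin(p-e*sin p))*(1-e*cos p)) * DD e p t
       - (cos (e*sin p)^2 * cos t^2 * cos(p+e*sin p) + sin t^2 * cos(p-e*sin p))
        * (2*cos (e*sin p)*(-sin (e*sin p))*(e*cos p)
           + 2*sin (e*sin p)*cos (e*sin p)*(e*cos p)*sin t^2)) / DD e p t ^ 2)
  | _ => - (((-(1/2)) * cos (2*(e*sin p)) * (2*(e*cos p)) * sin (2*t) * DD e p t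
       - (-(1/2)) * sin (2*(e*sin p)) * sin (2*t)
        * (2*cos (e*sin p)*(-sin (e*sin p))*(e*cos p)
           + 2*sin (e*sin p)*cos (e*sin p)*(e*cos p)*sin t^2)) / DD e p t ^ 2)
  end.

Definition d2 (e : R) (k : nat) (p t : R) : R :=
  match k with
  | 0%nat | 1%nat | 2%nat => 0
  | 3%nat => - (sgnth t *
      ((cos (e*sin p)^2 * (2*cos t*(-sin t)) * sin(p+e*sin p)
        + 2*sin t*cos t*sin(p-e*sin p)) * DD e p t
       - (cos (e*sin p)^2 * cos t^2 * sin(p+e*sin p) + sin t^2 * sin(p-e*sin p))
        * (sin (e*sin p)^2 * (2*sin t*cos t))) / DD e p t ^ 2)
  | 4%nat => - (sgnth t *
      ((cos (e*sin p)^2 * (2*cos t*(-sin t)) * cos(p+e*sin p)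
        + 2*sin t*cos t*cos(p-e*sin p)) * DD e p t
       - (cos (e*sin p)^2 * cos t^2 * cos(p+e*sin p) + sin t^2 * cos(p-e*sin p))
        * (sin (e*sin p)^2 * (2*sin t*cos t))) / DD e p t ^ 2)
  | _ => - (((-(1/2)) * sin (2*(e*sin p)) * (2 * cos (2*t)) * DD e p t
       - (-(1/2)) * sin (2*(e*sin p)) * sin (2*t)
        * (sin (e*sin p)^2 * (2*sin t*cos t))) / DD e p t ^ 2)
  end.

Ltac nz HD := let HH := fresh in intro HH; apply HD; unfold DD; rewrite <- HH; ring.

Lemma der1 e k p t : DD e p t <> 0 ->
  derivable_pt_lim (fun x => Fs e (sgnth t) k x t) p (d1 e k p t).
Proof.
  intro HD.
  destruct k as [|[|[|[|[|k]]]]]; unfold Fs, d1, Dden, nu;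
   try (apply derivable_pt_lim_const);
   apply is_derive_Reals; auto_derive.
  all: try exact I.
  all: try (nz HD).
  all: unfold DD in *; unfold Rminus; field; nz HD.
Qed.

Lemma der2 e k p t : DD e p t <> 0 ->
  derivable_pt_lim (fun y => Fs e (sgnth t) k p y) t (d2 e k p t).
Proof.
  intro HD.
  destruct k as [|[|[|[|[|k]]]]]; unfold Fs, d2, Dden, nu;
   try (apply derivable_pt_lim_const);
   apply is_derive_Reals; auto_derive.
  all: try exact I.
  all: try (nz HD).
  all: unfold DD in *; unfold Rminus; field; nz HD.
Qed.

Lemma sgn_loc t : t <> PI -> exists d, 0 < d /\ forall y, Rabs (y - t) < d -> sgnth y = sgnth t.
Proof.
  intro H. exists (Rabs (t - PI)). split.
  - apply Rabs_pos_lt. lra.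
  - intros y Hy. unfold sgnth.
    destruct (Rlt_dec t PI) as [h|h].
    + rewrite (Rabs_left (t - PI)) in Hy by lra. apply Rabs_def2 in Hy.
      destruct (Rlt_dec y PI); [reflexivity| lra].
    + assert (PI < t) by lra. rewrite (Rabs_right (t - PI)) in Hy by lra. apply Rabs_def2 in Hy.
      destruct (Rlt_dec y PI); [lra| reflexivity].
Qed.

Lemma dloc (F : R -> R -> R) t l : t <> PI ->
  derivable_pt_lim (fun y => F (sgnth t) y) t l ->
  derivable_pt_lim (fun y => F (sgnth y) y) t l.
Proof.
  intros Ht Hd eps Heps.
  destruct (Hd eps Heps) as [del Hdel].
  destruct (sgn_loc t Ht) as [d [Hd0 Hloc]].
  assert (Hm : 0 < Rmin del d) by (apply Rmin_pos; [apply cond_pos|lra]).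
  exists (mkposreal _ Hm). intros h Hh0 Hh. simpl in Hh.
  rewrite (Hloc (t + h)).
  - apply Hdel; auto. eapply Rlt_le_trans; [exact Hh| apply Rmin_l].
  - replace (t + h - t) with h by ring. eapply Rlt_le_trans; [exact Hh| apply Rmin_r].
Qed.

Lemma c2_sgn x y : y <> PI -> continuity_2d_pt (fun _ v => sgnth v) x y.
Proof.
  intro H. apply continuity_2d_pt_ext_loc with (f := fun _ _ => sgnth y).
  - destruct (sgn_loc y H) as [d [Hd Hl]]. exists (mkposreal _ Hd).
    intros u v _ Hv. simpl in Hv. symmetry. apply Hl. exact Hv.
  - apply continuity_2d_pt_const.
Qed.

Lemma c2_div f g x y : continuity_2d_pt f x y -> continuity_2d_pt g x y -> g x y <> 0 ->
  continuity_2d_pt (fun u v => f u v / g u v) x y.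
Proof.
  intros. apply continuity_2d_pt_mult; auto. apply continuity_2d_pt_inv; auto.
Qed.

Lemma c2_sin f x y : continuity_2d_pt f x y -> continuity_2d_pt (fun u v => sin (f u v)) x y.
Proof. intros. apply (continuity_1d_2d_pt_comp sin); auto. apply continuity_sin. Qed.
Lemma c2_cos f x y : continuity_2d_pt f x y -> continuity_2d_pt (fun u v => cos (f u v)) x y.
Proof. intros. apply (continuity_1d_2d_pt_comp cos); auto. apply continuity_cos. Qed.
Lemma c2_pow f n x y : continuity_2d_pt f x y -> continuity_2d_pt (fun u v => f u v ^ n) x y.
Proof. intros. apply (continuity_1d_2d_pt_comp (fun z => z ^ n)); auto.
  apply derivable_continuous_pt. apply derivable_pt_pow. Qed.

Ltac c2 :=
  match goal with
  | |- continuity_2d_pt (fun _ _ => ?c) _ _ => apply continuity_2d_pt_const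
  | |- continuity_2d_pt (fun u _ => u) _ _ => apply continuity_2d_pt_id1
  | |- continuity_2d_pt (fun _ v => v) _ _ => apply continuity_2d_pt_id2
  | |- continuity_2d_pt (fun _ v => sgnth v) _ _ => apply c2_sgn; assumption
  | |- continuity_2d_pt (fun u v => @?f u v + @?g u v) _ _ =>
       apply (continuity_2d_pt_plus f g); c2
  | |- continuity_2d_pt (fun u v => @?f u v - @?g u v) _ _ =>
       apply (continuity_2d_pt_minus f g); c2
  | |- continuity_2d_pt (fun u v => @?f u v * @?g u v) _ _ =>
       apply (continuity_2d_pt_mult f g); c2
  | |- continuity_2d_pt (fun u v => @?f u v / @?g u v) _ _ =>
       apply (c2_div f g); [c2|c2|idtac]
  | |- continuity_2d_pt (fun u v => - @?f u v) _ _ =>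
       apply (continuity_2d_pt_opp f); c2
  | |- continuity_2d_pt (fun u v => sin (@?f u v)) _ _ => apply (c2_sin f); c2
  | |- continuity_2d_pt (fun u v => cos (@?f u v)) _ _ => apply (c2_cos f); c2
  | |- continuity_2d_pt (fun u v => (@?f u v) ^ ?n) _ _ => apply (c2_pow f n); c2
  | |- continuity_2d_pt (fun u v => DD ?e u v) _ _ => unfold DD; c2
  end.

Lemma cont_d1 e k p t : t <> PI -> DD e p t <> 0 -> continuity_2d_pt (d1 e k) p t.
Proof.
  intros Ht HD.
  destruct k as [|[|[|[|[|k]]]]]; cbv beta iota zeta delta [d1]; c2.
  all: try (apply pow_nonzero; exact HD).
Qed.

Lemma cont_d2 e k p t : t <> PI -> DD e p t <> 0 -> continuity_2d_pt (d2 e k) p t.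
Proof.
  intros Ht HD.
  destruct k as [|[|[|[|[|k]]]]]; cbv beta iota zeta delta [d2]; c2.
  all: try (apply pow_nonzero; exact HD).
Qed.

Lemma PIhalf_gt1 : 1 < PI / 2.
Proof. exact PI2_1. Qed.

Lemma cosnu_pos e p : 0 < e < 1 -> 0 < cos (e * sin p).
Proof.
  intros He. pose proof (SIN_bound p). pose proof PIhalf_gt1.
  apply cos_gt_0; nra.
Qed.

Lemma DD_pos e p t : 0 < e < 1 -> 0 < DD e p t.
Proof.
  intros He. pose proof (cosnu_pos e p He). unfold DD.
  pose proof (pow2_ge_0 (sin (e * sin p))). pose proof (pow2_ge_0 (sin t)).
  pose proof (pow_lt _ 2 H). nra.
Qed.

Lemma sg_sq t : sgnth t * sgnth t = 1.
Proof. unfold sgnth. destruct (Rlt_dec t PI); ring. Qed.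

Lemma kill1 s E Q : s * s = 1 -> Q <> 0 -> - (s * E / Q) = 0 -> E = 0.
Proof. intros Hs HQ H. replace E with (- (s * (- (s * E / Q)) * Q)) by (field_simplify; [|exact HQ]; 
  transitivity (E * (s*s)); [ring| rewrite Hs; ring]). rewrite H. ring. Qed.

Lemma kill2 E Q : Q <> 0 -> - (E / Q) = 0 -> E = 0.
Proof. intros HQ H. replace E with (- (- (E / Q)) * Q) by (field; exact HQ). rewrite H. ring. Qed.

Lemma ident3 c s st ct A B : s ^ 2 = 1 - c ^ 2 -> st ^ 2 = 1 - ct ^ 2 ->
  (c ^ 2 * (2 * ct * - st) * A + 2 * st * ct * B) * (c ^ 2 + s ^ 2 * st ^ 2) -
  (c ^ 2 * ct ^ 2 * A + st ^ 2 * B) * (s ^ 2 * (2 * st * ct))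
  = 2 * st * ct * c ^ 2 * (B - A).
Proof. intros H1 H2. rewrite H1, H2. ring. Qed.

Lemma inj e p t u v : 0 < e < 1 -> 0 < p < PI -> t <> PI ->
  (forall k, (k < 6)%nat -> u * d1 e k p t + v * d2 e k p t = 0) -> u = 0 /\ v = 0.
Proof.
  intros He Hp Ht H.
  pose proof (H 0%nat ltac:(lia)) as H0. pose proof (H 1%nat ltac:(lia)) as H1.
  pose proof (H 3%nat ltac:(lia)) as H3. pose proof (H 4%nat ltac:(lia)) as H4.
  pose proof (H 5%nat ltac:(lia)) as H5. clear H.
  cbv beta iota delta [d1 d2] in H0, H1, H3, H4, H5.
  pose proof (sg_sq t) as Hsg.
  pose proof (COS_bound p). pose proof (SIN_bound p).
  assert (Hw : 0 < 1 + e * cos p) by nra.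
  set (q := p + e * sin p) in *.
  assert (Hu : u = 0).
  { set (sg := sgnth t) in *. set (w := 1 + e * cos p) in *.
    assert (C0 : u*sg*w*cos q = 0) by nra.
    assert (C1 : u*sg*w*sin q = 0) by nra.
    assert (Z : (u*sg*w)^2 = (u*sg*w*cos q)^2 + (u*sg*w*sin q)^2).
    { transitivity ((u*sg*w)^2 * (Rsqr (sin q) + Rsqr (cos q))).
      - rewrite sin2_cos2; ring.
      - unfold Rsqr; ring. }
    rewrite C0, C1 in Z.
    assert (Z2 : u * sg * w = 0) by nra.
    assert (Z3 : u * sg * sg * w = 0) by (replace (u*sg*sg*w) with (u*sg*w*sg) by ring; rewrite Z2; ring).
    replace (u * sg * sg * w) with (u * w) in Z3 by (transitivity (u*w*(sg*sg)); [rewrite Hsg; ring| ring]).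
    apply Rmult_integral in Z3. destruct Z3; [assumption| lra].
  }
  split; [exact Hu|].
  subst u. rewrite Rmult_0_l, Rplus_0_l in H3, H4, H5.
  destruct (Req_dec v 0) as [Hv|Hv]; [exact Hv| exfalso].
  apply Rmult_integral in H3. destruct H3 as [H3|H3]; [contradiction|].
  apply Rmult_integral in H4. destruct H4 as [H4|H4]; [contradiction|].
  apply Rmult_integral in H5. destruct H5 as [H5|H5]; [contradiction|].
  assert (HQ : DD e p t ^ 2 <> 0) by (apply pow_nonzero; pose proof (DD_pos e p t He); lra).
  apply (kill1 _ _ _ Hsg HQ) in H3. apply (kill1 _ _ _ Hsg HQ) in H4.
  apply kill2 in H5; [|exact HQ].
  assert (HDp := DD_pos e p t He). unfold DD in *.
  assert (Hn : 0 < e * sin p < 1) by (pose proof (sin_gt_0 p ltac:(lra) ltac:(lra)); nra).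
  assert (Hsn : 0 < sin (e * sin p)) by (apply sin_gt_0; pose proof PIhalf_gt1; lra).
  assert (Hcn := cosnu_pos e p He).
  pose proof (sin2_cos2 (e * sin p)) as Sn. pose proof (sin2_cos2 t) as St.
  pose proof (sin2_cos2 p) as Sp.
  unfold Rsqr in Sn, St, Sp.
  assert (E1 : sin (e * sin p) ^ 2 = 1 - cos (e * sin p) ^ 2) by (simpl; lra).
  assert (E2 : sin t ^ 2 = 1 - cos t ^ 2) by (simpl; lra).
  rewrite ident3 in H3 by assumption.
  rewrite ident3 in H4 by assumption.
  rewrite sin_2a, cos_2a, sin_2a in H5.
  set (st := sin t) in *. set (ct := cos t) in *.
  set (s := sin (e * sin p)) in *. set (c := cos (e * sin p)) in *.
  assert (H5' : (ct * ct - st * st) * (c ^ 2 + s ^ 2 * st ^ 2) - 2 * st * ct * (s ^ 2 * st * ct) = 0).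
  { assert (Hsc : s * c <> 0) by nra.
    apply (Rmult_eq_reg_l (- (s * c))); [| nra].
    nra. }
  destruct (Req_dec (st * ct) 0) as [HX|HX].
  - assert (K1 : (ct * ct - st * st) * (c ^ 2 + s ^ 2 * st ^ 2) = 0).
    { rewrite <- H5'. replace (2 * st * ct * (s ^ 2 * st * ct)) with (2 * (st * ct) * (s^2 * st * ct)) by ring.
      rewrite HX. ring. }
    apply Rmult_integral in K1. destruct K1 as [K1|K1]; [|lra].
    assert (K2 : (st * ct) * (st * ct) = 1/4) by nra.
    rewrite HX in K2. lra.
  - assert (Hc2 : 2 * st * ct * c ^ 2 <> 0) by (apply Rmult_integral_contrapositive_currified; [nra| apply pow_nonzero; lra]).
    apply Rmult_integral in H3. destruct H3 as [H3|H3]; [contradiction|].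
    apply Rmult_integral in H4. destruct H4 as [H4|H4]; [contradiction|].
    unfold q in *. rewrite sin_minus, sin_plus in H3. rewrite cos_minus, cos_plus in H4.
    fold s c in H3, H4.
    assert (A1 : cos p * s = 0) by nra.
    assert (A2 : sin p * s = 0) by nra.
    nra.
Qed.

Lemma c2_bridge f x y : continuity_2d_pt f x y -> continuous2 f x y.
Proof.
  intros H e He. destruct (H (mkposreal e He)) as [d Hd].
  exists d. split; [apply cond_pos|]. intros p' t' H1 H2. apply Hd; assumption.
Qed.

Theorem mainTheorem11 :
  exists eps0 : R, 0 < eps0 /\
    forall eps : R, 0 < eps < eps0 ->
      C1_immersion_on dom 6 (Fmap eps).
Proof.
  exists 1. split; [lra|]. intros e He.
  exists (d1 e), (d2 e). split; [|split].
  - intros k p t Hk [Hp Ht].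
    assert (HtPI : t <> PI) by (intro; subst; lra).
    assert (HD : DD e p t <> 0) by (pose proof (DD_pos e p t He); lra).
    destruct k as [|[|[|[|[|[|k]]]]]]; try lia; split;
      first [ exact (der1 e 0 p t HD) | exact (der1 e 1 p t HD) | exact (der1 e 2 p t HD)
               | exact (der1 e 3 p t HD) | exact (der1 e 4 p t HD) | exact (der1 e 5 p t HD)
               | apply (dloc (fun s y => Fs e s 0 p y)); [exact HtPI | exact (der2 e 0 p t HD)]
               | apply (dloc (fun s y => Fs e s 1 p y)); [exact HtPI | exact (der2 e 1 p t HD)]
               | apply (dloc (fun s y => Fs e s 2 p y)); [exact HtPI | exact (der2 e 2 p t HD)]
               | apply (dloc (fun s y => Fs e s 3 p y)); [exact HtPI | exact (der2 e 3 p t HD)]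
               | apply (dloc (fun s y => Fs e s 4 p y)); [exact HtPI | exact (der2 e 4 p t HD)]
               | apply (dloc (fun s y => Fs e s 5 p y)); [exact HtPI | exact (der2 e 5 p t HD)] ].
  - intros k p t Hk [Hp Ht].
    assert (HtPI : t <> PI) by (intro; subst; lra).
    assert (HD : DD e p t <> 0) by (pose proof (DD_pos e p t He); lra).
    split; apply c2_bridge; [apply cont_d1 | apply cont_d2]; assumption.
  - intros p t [Hp Ht] u v H.
    assert (HtPI : t <> PI) by (intro; subst; lra).
    apply (inj e p t u v He Hp HtPI H).
Qed.
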